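(* Let $A=\mathrm{diag}(G_1,\dots,G_m,[1])\in\mathbb{R}^{n\times n}$, $m\geq 1$, where the trailing block $[1]$ may or may not be present, with $G_j=\begin{bmatrix}c_j&s_j\\-s_j&c_j\end{bmatrix}$, $c_j^2+s_j^2=1$, $s_j\neq 0$, and $0<c_1<c_2<\cdots<c_m<1$. Let $v_0\in\mathbb{R}^n$ be a unit norm vector with $d(A,v_0)\geq 2$ and $v_0^{(1)}\neq 0$. Then the sequence $\{v_k\}$ of the iteration ACI($1$) below converges to a single limit vector.
   Context: Block partitioning: every $v\in\mathbb{R}^n$ is written as $v=[v^{(1)};\dots;v^{(m)};v^{(m+1)}]$ with $v^{(j)}\in\mathbb{R}^2$ for $j=1,\dots,m$ (conforming with the blocks $G_j$) and $v^{(m+1)}\in\mathbb{R}$ (present only if the block $[1]$ is present). ACI($1$): for $k=0,1,2,\dots$: $\widetilde w_k=(A-\alpha_kI)v_k$ with $\alpha_k=v_k^TAv_k$; $w_k=\widetilde w_k/\|\widetilde w_k\|$; $\widetilde v_{k+1}=(A^T-\beta_kI)w_k$ with $\beta_k=w_k^TAw_k$; $v_{k+1}=\widetilde v_{k+1}/\|\widetilde v_{k+1}\|$. $d(A,v)$ is the grade of $v$ w.r.t. $A$ (degree of the monic polynomial $p$ of smallest degree with $p(A)v=0$); $\|\cdot\|$ is the Euclidean norm. *)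

(* Defs.v *)
From HB Require Import structures.
From mathcomp Require Import all_boot all_order all_algebra.
From mathcomp Require Import all_classical all_reals all_analysis.
Set Implicit Arguments. Unset Strict Implicit. Unset Printing Implicit Defensive.
Import Order.TTheory GRing.Theory Num.Theory.
Local Open Scope ring_scope.

Section ACI.
Variable R : realType.

(* A = diag(G_1,...,G_m,[1]) of size n = 2m + b, where b = true iff the
   trailing 1x1 block [1] is present; G_j = [[c_j, s_j]; [-s_j, c_j]]
   (blocks indexed j = 0..m-1 here, i.e. G_{j+1} of the paper). *)
Definition blkA (m : nat) (b : bool) (c s : nat -> R) : 'M[R]_(m.*2 + b) :=
  \matrix_(i, j)
    if ((i < m.*2) && (j < m.*2) && (i./2 == j./2))%N then
      (if odd i then (if odd j then c i./2 else - s i./2)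
                else (if odd j then s i./2 else c i./2))
    else if ((m.*2 <= i) && (i == j :> nat))%N then 1 else 0.

Definition dotv n (u v : 'cV[R]_n) : R := \sum_i u i 0 * v i 0.
Definition vnorm n (v : 'cV[R]_n) : R := Num.sqrt (dotv v v).

Definition mxpeval n (A : 'M[R]_n) (p : {poly R}) : 'M[R]_n :=
  \sum_(i < size p) p`_i *: A ^+ i.

(* d(A,v) : degree of a monic polynomial of smallest degree with p(A)v = 0
   (such a polynomial always exists by Cayley--Hamilton). *)
Definition grade_pred n (A : 'M[R]_n) (v : 'cV[R]_n) : pred nat :=
  fun d => `[< exists p : {poly R},
              [/\ p \is monic, (size p).-1 = d & mxpeval A p *m v = 0] >].

Definition grade n (A : 'M[R]_n) (v : 'cV[R]_n) : nat :=
  match pselect (exists d, grade_pred A v d) with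
  | left h => ex_minn h
  | right _ => 0%N
  end.

Definition aci_wt n (A : 'M[R]_n) (v : 'cV[R]_n) : 'cV[R]_n :=
  (A - (dotv v (A *m v))%:M) *m v.
Definition aci_w n (A : 'M[R]_n) (v : 'cV[R]_n) : 'cV[R]_n :=
  (vnorm (aci_wt A v))^-1 *: aci_wt A v.
Definition aci_vt n (A : 'M[R]_n) (v : 'cV[R]_n) : 'cV[R]_n :=
  let w := aci_w A v in (A^T - (dotv w (A *m w))%:M) *m w.
Definition aci_step n (A : 'M[R]_n) (v : 'cV[R]_n) : 'cV[R]_n :=
  (vnorm (aci_vt A v))^-1 *: aci_vt A v.

Fixpoint aci_v n (A : 'M[R]_n) (v0 : 'cV[R]_n) (k : nat) : 'cV[R]_n :=
  if k is k'.+1 then aci_step A (aci_v A v0 k') else v0.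

End ACI.

(* Main.v *)
Require Import Defs.
From HB Require Import structures.
From mathcomp Require Import all_boot all_order all_algebra.
From mathcomp Require Import all_classical all_reals all_analysis.
From mathcomp Require Import zify ring lra.
Import Order.TTheory GRing.Theory Num.Theory.
Import numFieldNormedType.Exports.
Local Open Scope classical_set_scope.
Local Open Scope ring_scope.
Set Implicit Arguments. Unset Strict Implicit. Unset Printing Implicit Defensive.

Section Basic.
Variable R : realType.
Variables (m : nat) (b : bool) (c : nat -> R).
Local Notation n := (m.*2 + b)%N.

Definition co (x : 'cV[R]_n) (k : nat) : R :=
  if insub k is Some i then x i 0 else 0.

Lemma coE x (i : 'I_n) : co x i = x i 0.
Proof. by rewrite /co valK. Qed.

Lemma co_out x k : (n <= k)%N -> co x k = 0.
Proof. by move=> h; rewrite /co insubF // ltnNge h. Qed.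

Lemma coD x y k : co (x + y) k = co x k + co y k.
Proof. by rewrite /co; case: insub => [i|]; rewrite ?mxE ?addr0. Qed.

Lemma coZ a x k : co (a *: x) k = a * co x k.
Proof. by rewrite /co; case: insub => [i|]; rewrite ?mxE ?mulr0. Qed.

Lemma coN x k : co (- x) k = - co x k.
Proof. by rewrite /co; case: insub => [i|]; rewrite ?mxE ?oppr0. Qed.

Lemma co0 k : co 0 k = 0.
Proof. by rewrite /co; case: insub => [i|]; rewrite ?mxE. Qed.

Lemma sum_dbl (g : nat -> R) k :
  \sum_(0 <= i < k.*2) g i = \sum_(0 <= j < k) (g j.*2 + g j.*2.+1).
Proof.
elim: k => [|k IH]; first by rewrite !big_geq.
by rewrite doubleS !big_nat_recr //= IH addrA.
Qed.

Lemma sum_blocks (g : nat -> R) : (forall k, (n <= k)%N -> g k = 0) ->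
  \sum_(i < n) g i = \sum_(j < m.+1) (g j.*2 + g j.*2.+1).
Proof.
move=> g0.
rewrite -(big_mkord xpredT (fun i => g i)) -(big_mkord xpredT (fun j => g j.*2 + g j.*2.+1)).
rewrite -sum_dbl [RHS](big_cat_nat _ (n := n)) //=; last by case: b => /=; lia.
rewrite [X in _ + X]big_nat_cond [X in _ + X]big1 ?addr0 // => i /andP[/andP[hi _] _].
exact: g0.
Qed.

Lemma sum_collapse (F : nat -> R) N j : (j < N)%N ->
  (forall j', j' != j -> F j' = 0) -> \sum_(j' < N) F j' = F j.
Proof.
move=> hj h; rewrite (bigD1 (Ordinal hj)) //= big1 ?addr0 // => i ne.
apply: h; by apply: contra ne => /eqP e; apply/eqP/val_inj.
Qed.

Definition Cf j := if (j < m)%N then c j else 1.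
Definition Sf (s : nat -> R) j := if (j < m)%N then s j else 0.

Definition Ent (s : nat -> R) (i j : nat) : R :=
    if ((i < m.*2) && (j < m.*2) && (i./2 == j./2))%N then
      (if odd i then (if odd j then c i./2 else - s i./2)
                else (if odd j then s i./2 else c i./2))
    else if ((m.*2 <= i) && (i == j :> nat))%N then 1 else 0.

Lemma blkAE s (i j : 'I_n) : blkA m b c s i j = Ent s i j.
Proof. by rewrite mxE. Qed.

Lemma Ent_off s k l : l./2 != k./2 -> Ent s k l = 0.
Proof.
move=> ne; rewrite /Ent.
have -> : (k./2 == l./2) = false by apply/negbTE; rewrite eq_sym.
rewrite andbF; case: eqP => [e|]; last by rewrite andbF.
by move: ne; rewrite e eqxx.
Qed.

Lemma coA s x j :
  co (blkA m b c s *m x) j.*2 = Cf j * co x j.*2 + Sf s j * co x j.*2.+1 /\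
  co (blkA m b c s *m x) j.*2.+1 = - Sf s j * co x j.*2 + Cf j * co x j.*2.+1.
Proof.
have key : forall k, (k < n)%N -> k./2 = j ->
  co (blkA m b c s *m x) k = Ent s k j.*2 * co x j.*2 + Ent s k j.*2.+1 * co x j.*2.+1.
  move=> k hk hkj.
  rewrite -[k]/(nat_of_ord (Ordinal hk)) coE mxE.
  under eq_bigr => l _ do rewrite blkAE -coE.
  rewrite (sum_blocks (g:=fun l => Ent s k l * co x l)); last first.
    by move=> l hl; rewrite co_out ?mulr0.
  apply: (@sum_collapse (fun j0 => Ent s k j0.*2 * co x j0.*2 + Ent s k j0.*2.+1 * co x j0.*2.+1) m.+1 j).
    by case: b hk hkj => /= hk hkj; lia.
  move=> j' ne; rewrite !Ent_off ?mul0r ?addr0 //; rewrite hkj;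
  apply: contra ne => /eqP <-; apply/eqP; lia.
have h1 : (j.*2)./2 = j by lia.
have h2 : (j.*2.+1)./2 = j by lia.
have o1 : odd j.*2 = false by rewrite odd_double.
have o2 : odd j.*2.+1 = true by rewrite /= odd_double.
split.
- case: (ltnP j.*2 n) => h.
  + rewrite (key _ h h1).
    rewrite /Ent /Cf /Sf h1 h2 o1 o2 !eqxx.
    case: (ltnP j m) => hjm.
    * have -> : (j.*2 < m.*2)%N by lia.
      have -> : (j.*2.+1 < m.*2)%N by lia.
      by [].
    * have -> : (j.*2 < m.*2)%N = false by apply/negbTE; rewrite -leqNgt; lia.
      have -> : (m.*2 <= j.*2)%N by lia.
      have -> : (j.*2 == j.*2.+1) = false by apply/negbTE; lia.
      by rewrite /= mul1r !mul0r.
  + rewrite !co_out ?mulr0 ?addr0 //; lia.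
- case: (ltnP j.*2.+1 n) => h.
  + rewrite (key _ h h2).
    have hjm : (j < m)%N by case: b h => /= h; lia.
    rewrite /Ent /Cf /Sf hjm h1 h2 o1 o2 !eqxx.
    have -> : (j.*2.+1 < m.*2)%N by lia.
    have -> : (j.*2 < m.*2)%N by lia.
    by rewrite /= mulNr.
  + have hjm : (m <= j)%N by case: b h => /= h; lia.
    rewrite /Sf /Cf ltnNge hjm /= (@co_out x j.*2.+1) // mulr0 addr0.
    by rewrite oppr0 mul0r co_out.
Qed.

Lemma blkA_tr s : (blkA m b c s)^T = blkA m b c (fun j => - s j).
Proof.
apply/matrixP => i j; rewrite !mxE.
have e1 : ((i < m.*2) && (j < m.*2) && (i./2 == j./2))%N =
          ((j < m.*2) && (i < m.*2) && (j./2 == i./2))%N.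
  by rewrite eq_sym [X in X && _]andbC.
have e2 : ((m.*2 <= j) && (j == i :> nat))%N = ((m.*2 <= i) && (i == j :> nat))%N.
  by move: (nat_of_ord i) (nat_of_ord j) => x y; rewrite [y == x]eq_sym; case: eqP => [->|]; rewrite ?andbF.
rewrite e1 e2.
case: ifP => // /andP[_ /eqP hh]; rewrite hh.
by case: (odd i); case: (odd j); rewrite ?opprK.
Qed.

Lemma dotv_blocks x y : dotv x y =
  \sum_(j < m.+1) (co x j.*2 * co y j.*2 + co x j.*2.+1 * co y j.*2.+1).
Proof.
rewrite /dotv; under eq_bigr => i _ do rewrite -!coE.
rewrite (sum_blocks (g:=fun k => co x k * co y k)) // => k hk.
by rewrite co_out ?mul0r.
Qed.

Definition pb j (x : 'cV[R]_n) := co x j.*2 ^+ 2 + co x j.*2.+1 ^+ 2.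

Lemma pb_ge0 j x : 0 <= pb j x.
Proof. by rewrite /pb addr_ge0 // sqr_ge0. Qed.

Lemma dotv_pb x : dotv x x = \sum_(j < m.+1) pb j x.
Proof. by rewrite dotv_blocks; apply: eq_bigr => j _; rewrite /pb !expr2. Qed.

Lemma dotvA_pb s x : dotv x (blkA m b c s *m x) = \sum_(j < m.+1) Cf j * pb j x.
Proof.
rewrite dotv_blocks; apply: eq_bigr => j _.
have [-> ->] := coA s x j; rewrite /pb; ring.
Qed.

Lemma mxshift (M : 'M[R]_n) (t : R) (x : 'cV[R]_n) : (M - t%:M) *m x = M *m x - t *: x.
Proof. by rewrite mulmxBl mul_scalar_mx. Qed.

Lemma co_shift_A s t x j :
  co ((blkA m b c s - t%:M) *m x) j.*2 = (Cf j - t) * co x j.*2 + Sf s j * co x j.*2.+1 /\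
  co ((blkA m b c s - t%:M) *m x) j.*2.+1 = - Sf s j * co x j.*2 + (Cf j - t) * co x j.*2.+1.
Proof.
rewrite mxshift !coD !coN !coZ; have [-> ->] := coA s x j; split; ring.
Qed.

Lemma pb_shift s t x j :
  pb j ((blkA m b c s - t%:M) *m x) = ((Cf j - t) ^+ 2 + Sf s j ^+ 2) * pb j x.
Proof. rewrite /pb; have [-> ->] := co_shift_A s t x j; ring. Qed.

Lemma pbZ a x j : pb j (a *: x) = a ^+ 2 * pb j x.
Proof. rewrite /pb !coZ; ring. Qed.

End Basic.
Section Main.
Variable R : realType.
Variables (m : nat) (b : bool) (c s : nat -> R).
Local Notation n := (m.*2 + b)%N.
Hypothesis Hm : (1 <= m)%N.
Hypothesis Hcs : forall j, (j < m)%N -> c j ^+ 2 + s j ^+ 2 = 1.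
Hypothesis Hc0 : 0 < c 0%N.
Hypothesis Hinc : forall j, (j.+1 < m)%N -> c j < c j.+1.
Hypothesis Hlast : c m.-1 < 1.

Local Notation C := (Cf m c).
Local Notation A := (blkA m b c s).
Local Notation AT := (blkA m b c (fun j => - s j)).

Lemma c_mono i j : (i <= j)%N -> (j < m)%N -> c i <= c j.
Proof.
move=> hij; elim: j hij => [|j IH]; first by rewrite leqn0 => /eqP ->.
rewrite leq_eqVlt => /orP[/eqP -> //|hij] hj.
apply: le_trans (IH hij (ltnW hj)) _; exact/ltW/Hinc.
Qed.

Lemma c_lt1 j : (j < m)%N -> c j < 1.
Proof. move=> hj; apply: le_lt_trans Hlast; apply: c_mono => //; lia. Qed.

Lemma C_le1 j : C j <= 1.
Proof. by rewrite /Cf; case: ifP => // hj; exact/ltW/c_lt1. Qed.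

Lemma C_ge j : c 0%N <= C j.
Proof.
rewrite /Cf; case: ifP => hj; first by apply: c_mono.
exact/ltW/c_lt1.
Qed.

Lemma C0 : C 0%N = c 0%N.
Proof. by rewrite /Cf Hm. Qed.

Lemma C_mono i j : (i <= j)%N -> C i <= C j.
Proof.
move=> hij; rewrite /Cf; case: ifP => hi; case: ifP => hj.
- exact: c_mono.
- exact/ltW/c_lt1.
- lia.
- by [].
Qed.

Definition delta := C 1%N - c 0%N.

Lemma delta_gt0 : 0 < delta.
Proof.
rewrite /delta subr_gt0 /Cf; case: ifP => h.
- by apply: Hinc.
- by apply: c_lt1.
Qed.

Lemma delta_le1 : delta <= 1.
Proof. rewrite /delta; have := C_le1 1; move: Hc0; lra. Qed.

Lemma c0_lt1 : c 0%N < 1.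
Proof. exact: c_lt1. Qed.

Definition q := 1 - c 0%N * delta.

Lemma q_ge0 : 0 <= q.
Proof.
rewrite /q subr_ge0; have := c0_lt1; have := delta_le1; have := delta_gt0.
move: Hc0 => h0 h1 h2 h3; nra.
Qed.

Lemma q_lt1 : q < 1.
Proof. rewrite /q; have := delta_gt0; move: Hc0 => h0 h1; nra. Qed.

Definition ff j (t : R) := 1 - 2 * t * C j + t ^+ 2.

Lemma CS j : C j ^+ 2 + Sf m s j ^+ 2 = 1.
Proof. by rewrite /Cf /Sf; case: ifP => h; [exact: Hcs | rewrite expr1n expr0n addr0]. Qed.

Lemma CSN j : C j ^+ 2 + Sf m (fun j => - s j) j ^+ 2 = 1.
Proof. by rewrite /Cf /Sf; case: ifP => h; [rewrite sqrrN; exact: Hcs | rewrite expr1n expr0n addr0]. Qed.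

Lemma pb_shift_A t x j : pb j ((A - t%:M) *m x) = ff j t * pb j x.
Proof. rewrite pb_shift /ff; congr (_ * _); have := CS j; lra. Qed.

Lemma pb_shift_AT t x j : pb j ((AT - t%:M) *m x) = ff j t * pb j x.
Proof. rewrite pb_shift /ff; congr (_ * _); have := CSN j; lra. Qed.

Lemma ff0_lb t : 1 - c 0%N ^+ 2 <= ff 0 t.
Proof. rewrite /ff C0; have := sqr_ge0 (t - c 0%N); nra. Qed.

Lemma sig_gt0 : 0 < 1 - c 0%N ^+ 2.
Proof. have := c0_lt1; move: Hc0 => h h1; nra. Qed.

Lemma ff0_gt0 t : 0 < ff 0 t.
Proof. exact: lt_le_trans sig_gt0 (ff0_lb t). Qed.

Lemma ffj_le j t : (1 <= j)%N -> c 0%N <= t <= 1 -> ff j t <= q * ff 0 t.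
Proof.
move=> hj /andP[ht1 ht2].
have hC : delta <= C j - c 0%N by rewrite /delta; have := C_mono hj; lra.
have hf0 : ff 0 t <= 2 by rewrite /ff C0; move: Hc0 => h; nra.
have e : ff 0 t - ff j t = 2 * t * (C j - c 0%N) by rewrite /ff C0; ring.
have hd := delta_gt0.
rewrite /q.
have hp : 0 < c 0%N * delta by apply: mulr_gt0.
have h1 := ler_wpM2l (ltW hp) hf0.
have h2 : c 0%N * delta <= t * (C j - c 0%N).
  by apply: ler_pM => //; [exact: ltW | exact: ltW].
lra.
Qed.

Definition Dx (x : 'cV[R]_n) := \sum_(j < m) pb j.+1 x.
Definition Ex (x : 'cV[R]_n) := Dx x / pb 0 x.

Lemma Dx_ge0 x : 0 <= Dx x.
Proof. by apply: sumr_ge0 => j _; apply: pb_ge0. Qed.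

Lemma dot_split x : dotv x x = pb 0 x + Dx x.
Proof. by rewrite dotv_pb big_ord_recl. Qed.

Lemma Ex_ge0 x : 0 <= Ex x.
Proof. by rewrite /Ex divr_ge0 ?Dx_ge0 ?pb_ge0. Qed.

Lemma alpha_range s' (x : 'cV[R]_n) : dotv x x = 1 ->
  c 0%N <= dotv x (blkA m b c s' *m x) <= 1.
Proof.
move=> hx; rewrite dotvA_pb; rewrite dotv_pb in hx; apply/andP; split.
- rewrite -[c 0%N]mulr1 -hx mulr_sumr; apply: ler_sum => j _.
  by apply: ler_wpM2r; [apply: pb_ge0 | apply: C_ge].
- rewrite -hx; apply: ler_sum => j _.
  by rewrite -[X in _ <= X]mul1r; apply: ler_wpM2r; [apply: pb_ge0 | apply: C_le1].
Qed.

Lemma alpha_sub s' (x : 'cV[R]_n) : dotv x x = 1 ->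
  dotv x (blkA m b c s' *m x) - c 0%N <= Dx x.
Proof.
move=> hx; rewrite dotvA_pb; rewrite dotv_pb in hx.
have -> : \sum_(j < m.+1) C j * pb j x - c 0%N = \sum_(j < m.+1) (C j - c 0%N) * pb j x.
  rewrite -[X in _ - X]mulr1 -hx mulr_sumr -sumrB; apply: eq_bigr => j _; ring.
rewrite big_ord_recl C0 subrr mul0r add0r; apply: ler_sum => j _.
rewrite -[X in _ <= X]mul1r; apply: ler_wpM2r; first exact: pb_ge0.
have := C_le1 j.+1; move: Hc0; lra.
Qed.

Lemma dotvZ a (x : 'cV[R]_n) : dotv (a *: x) (a *: x) = a ^+ 2 * dotv x x.
Proof. by rewrite !dotv_pb mulr_sumr; apply: eq_bigr => j _; rewrite pbZ. Qed.

Lemma dotv_ge_pb0 (x : 'cV[R]_n) : pb 0 x <= dotv x x.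
Proof. by rewrite dot_split lerDl Dx_ge0. Qed.

Lemma normalize (y : 'cV[R]_n) : 0 < dotv y y ->
  dotv ((vnorm y)^-1 *: y) ((vnorm y)^-1 *: y) = 1.
Proof.
move=> hy; rewrite dotvZ /vnorm exprVn sqr_sqrtr ?(ltW hy) // mulVf //.
by rewrite gt_eqF.
Qed.

Lemma nz_of_pb (y : 'cV[R]_n) : 0 < pb 0 y -> y != 0.
Proof. by apply: contraTneq => ->; rewrite /pb !co0 expr0n addr0 ltxx. Qed.

Lemma half (F : 'cV[R]_n -> 'cV[R]_n) t a x :
  (forall j, pb j (F x) = ff j t * pb j x) -> c 0%N <= t <= 1 ->
  pb 0 (a *: F x) = a ^+ 2 * ff 0 t * pb 0 x /\
  Dx (a *: F x) <= q * (a ^+ 2 * ff 0 t) * Dx x.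
Proof.
move=> hF ht; split; first by rewrite pbZ hF mulrA.
rewrite /Dx mulr_sumr; apply: ler_sum => j _.
rewrite pbZ hF.
have h1 := ffj_le (isT : (1 <= j.+1)%N) ht.
have h2 : 0 <= a ^+ 2 * pb j.+1 x by rewrite mulr_ge0 ?sqr_ge0 ?pb_ge0.
have := ler_wpM2r h2 h1.
have e1 : ff j.+1 t * (a ^+ 2 * pb j.+1 x) = a ^+ 2 * (ff j.+1 t * pb j.+1 x) by ring.
have e2 : q * ff 0 t * (a ^+ 2 * pb j.+1 x) = q * (a ^+ 2 * ff 0 t) * pb j.+1 x by ring.
by rewrite e1 e2.
Qed.

Lemma halfstep (F : 'cV[R]_n -> 'cV[R]_n) t y :
  (forall j z, pb j (F z) = ff j t * pb j z) -> c 0%N <= t <= 1 -> 0 < pb 0 y ->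
  [/\ F y != 0, dotv ((vnorm (F y))^-1 *: F y) ((vnorm (F y))^-1 *: F y) = 1,
      0 < pb 0 ((vnorm (F y))^-1 *: F y) &
      Ex ((vnorm (F y))^-1 *: F y) <= q * Ex y].
Proof.
move=> hF ht hy.
have hp : 0 < pb 0 (F y) by rewrite hF mulr_gt0 // ff0_gt0.
have hd : 0 < dotv (F y) (F y) by apply: lt_le_trans hp (dotv_ge_pb0 _).
have hn : 0 < vnorm (F y) by rewrite /vnorm sqrtr_gt0.
have [e1 e2] := half (vnorm (F y))^-1 (hF ^~ y) ht.
have hK : 0 < (vnorm (F y))^-1 ^+ 2 * ff 0 t.
  by rewrite mulr_gt0 ?ff0_gt0 // exprn_gt0 // invr_gt0.
split.
- exact: nz_of_pb.
- exact: normalize.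
- by rewrite e1 mulr_gt0.
- rewrite /Ex e1.
  set K := (vnorm (F y))^-1 ^+ 2 * ff 0 t in hK e1 e2 *.
  rewrite ler_pdivrMr; last by apply: mulr_gt0.
  apply: le_trans e2 _.
  have -> : q * Ex y * (K * pb 0 y) = q * K * Dx y.
    by rewrite /Ex; field; rewrite gt_eqF.
  by [].
Qed.

Lemma stepw (x : 'cV[R]_n) : dotv x x = 1 -> 0 < pb 0 x ->
  [/\ aci_wt A x != 0, dotv (aci_w A x) (aci_w A x) = 1,
      0 < pb 0 (aci_w A x) & Ex (aci_w A x) <= q * Ex x].
Proof.
move=> hx hp.
have := @halfstep (fun z => (A - (dotv x (A *m x))%:M) *m z) (dotv x (A *m x)) x
  (fun j z => pb_shift_A _ _ _) (alpha_range _ hx) hp.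
by case=> h1 h2 h3 h4; split.
Qed.

Lemma stepv (x : 'cV[R]_n) : dotv x x = 1 -> 0 < pb 0 x ->
  [/\ aci_vt A x != 0, dotv (aci_step A x) (aci_step A x) = 1,
      0 < pb 0 (aci_step A x) & Ex (aci_step A x) <= q * Ex (aci_w A x)].
Proof.
move=> hx hp; have [_ hw1 hw2 _] := stepw hx hp.
set w := aci_w A x in hw1 hw2 *.
have := @halfstep (fun z => (AT - (dotv w (A *m w))%:M) *m z) (dotv w (A *m w)) w
  (fun j z => pb_shift_AT _ _ _) (alpha_range _ hw1) hw2.
by rewrite /aci_step /aci_vt -/w blkA_tr; case=> h1 h2 h3 h4; split.
Qed.

Definition vv (v0 : 'cV[R]_n) k := aci_v A v0 k.

Lemma iter_props (v0 : 'cV[R]_n) : dotv v0 v0 = 1 -> 0 < pb 0 v0 -> forall k,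
  [/\ dotv (vv v0 k) (vv v0 k) = 1, 0 < pb 0 (vv v0 k) &
      Ex (vv v0 k) <= (q ^+ 2) ^+ k * Ex v0].
Proof.
move=> h1 h2; elim=> [|k [IH1 IH2 IH3]]; first by rewrite expr0 mul1r.
have [_ hw1 hw2 hw3] := stepw IH1 IH2.
have [_ hv1 hv2 hv3] := stepv IH1 IH2.
rewrite /vv /=; split => //.
have hq := q_ge0.
apply: (le_trans hv3); apply: (le_trans (ler_wpM2l hq hw3)).
apply: (le_trans (ler_wpM2l hq (ler_wpM2l hq IH3))).
by rewrite [(q ^+ 2) ^+ k.+1]exprS expr2 !mulrA.
Qed.

Lemma step_coords (x : 'cV[R]_n) (al be mu nu : R) :
  al = dotv x (A *m x) -> be = dotv (aci_w A x) (A *m aci_w A x) ->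
  mu = (vnorm (aci_wt A x))^-1 -> nu = (vnorm (aci_vt A x))^-1 ->
  co (aci_step A x) 0 = nu * mu * (((c 0%N - al) * (c 0%N - be) + s 0%N ^+ 2) * co x 0
                                  + s 0%N * (al - be) * co x 1) /\
  co (aci_step A x) 1 = nu * mu * (- (s 0%N * (al - be)) * co x 0
                                  + ((c 0%N - al) * (c 0%N - be) + s 0%N ^+ 2) * co x 1).
Proof.
move=> hal hbe hmu hnu.
have S0 : Sf m s 0 = s 0%N by rewrite /Sf Hm.
have SN0 : Sf m (fun j => - s j) 0 = - s 0%N by rewrite /Sf Hm.
have [w0 w1] : co (aci_w A x) 0 = mu * ((c 0%N - al) * co x 0 + s 0%N * co x 1) /\
               co (aci_w A x) 1 = mu * (- s 0%N * co x 0 + (c 0%N - al) * co x 1).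
  rewrite /aci_w !coZ -hmu /aci_wt -hal.
  have [-> ->] := @co_shift_A R m b c s al x 0.
  by rewrite C0 S0.
rewrite /aci_step !coZ -hnu.
have -> : aci_vt A x = (AT - be%:M) *m aci_w A x by rewrite /aci_vt blkA_tr -hbe.
have [e0 e1] := @co_shift_A R m b c (fun j => - s j) be (aci_w A x) 0.
rewrite e0 e1.
rewrite ?double0 C0 SN0 w0 w1; split; ring.
Qed.

Lemma incr_scalar (x0 x1 lam a d P0 P1 : R) :
  `|x0| <= 1 -> `|x1| <= 1 -> 0 <= lam -> 0 <= a -> 0 < P0 ->
  P0 = x0 ^+ 2 + x1 ^+ 2 ->
  P1 = (lam * (a * x0 + d * x1)) ^+ 2 + (lam * (- d * x0 + a * x1)) ^+ 2 ->
  `|lam * (a * x0 + d * x1) - x0| <= `|P1 - P0| / P0 + lam ^+ 2 * d ^+ 2 + lam * `|d| /\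
  `|lam * (- d * x0 + a * x1) - x1| <= `|P1 - P0| / P0 + lam ^+ 2 * d ^+ 2 + lam * `|d|.
Proof.
move=> hx0 hx1 hl ha hP0 e0 e1.
set z := lam * a.
have hz : 0 <= z by rewrite /z mulr_ge0.
have hP1 : P1 = (z ^+ 2 + lam ^+ 2 * d ^+ 2) * P0 by rewrite e1 e0 /z; ring.
have h1 : `|z - 1| <= `|z ^+ 2 - 1|.
  have -> : z ^+ 2 - 1 = (z - 1) * (z + 1) by ring.
  rewrite normrM -[X in X <= _]mulr1; apply: ler_wpM2l => //.
  by rewrite ger0_norm ?addr_ge0 // lerDr.
have h2 : z ^+ 2 - 1 = (P1 - P0) / P0 - lam ^+ 2 * d ^+ 2.
  by rewrite hP1; field; rewrite gt_eqF.
have h3 : `|z ^+ 2 - 1| <= `|P1 - P0| / P0 + lam ^+ 2 * d ^+ 2.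
  have hnn : 0 <= lam ^+ 2 * d ^+ 2 by rewrite mulr_ge0 ?sqr_ge0.
  rewrite h2; apply: le_trans (ler_normB _ _) _.
  by rewrite normrM normfV (gtr0_norm hP0) (ger0_norm hnn).
have hd : 0 <= lam * `|d| by rewrite mulr_ge0.
split.
- have -> : lam * (a * x0 + d * x1) - x0 = (z - 1) * x0 + (lam * d) * x1 by rewrite /z; ring.
  apply: le_trans (ler_normD _ _) _; rewrite !normrM (ger0_norm hl).
  have g1 : `|z - 1| * `|x0| <= `|P1 - P0| / P0 + lam ^+ 2 * d ^+ 2.
    by apply: le_trans h3; apply: le_trans h1; apply: ler_piMr.
  have g2 : lam * `|d| * `|x1| <= lam * `|d| by apply: ler_piMr.
  by apply: lerD.
- have -> : lam * (- d * x0 + a * x1) - x1 = (z - 1) * x1 - (lam * d) * x0 by rewrite /z; ring.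
  apply: le_trans (ler_normB _ _) _; rewrite !normrM (ger0_norm hl).
  have g1 : `|z - 1| * `|x1| <= `|P1 - P0| / P0 + lam ^+ 2 * d ^+ 2.
    by apply: le_trans h3; apply: le_trans h1; apply: ler_piMr.
  have g2 : lam * `|d| * `|x0| <= lam * `|d| by apply: ler_piMr.
  by apply: lerD.
Qed.

Lemma Dx_le_Ex (x : 'cV[R]_n) : dotv x x = 1 -> 0 < pb 0 x -> Dx x <= Ex x.
Proof.
move=> hx hp; rewrite /Ex ler_pdivlMr // -[X in _ <= X]mulr1.
apply: ler_wpM2l; first exact: Dx_ge0.
by rewrite -hx dot_split lerDl Dx_ge0.
Qed.

Lemma inv_pb0 (x : 'cV[R]_n) : dotv x x = 1 -> 0 < pb 0 x -> (pb 0 x)^-1 = 1 + Ex x.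
Proof.
move=> hx hp; rewrite dot_split in hx.
rewrite /Ex; have -> : Dx x = 1 - pb 0 x by rewrite -hx; ring.
by field; rewrite gt_eqF.
Qed.

Lemma co_small01 (x : 'cV[R]_n) i : dotv x x = 1 -> `|co x i| <= 1.
Proof.
move=> hx.
have h : co x i ^+ 2 <= 1.
  case: (ltnP i n) => hi; last by rewrite co_out // expr0n ler01.
  rewrite -hx /dotv (bigD1 (Ordinal hi)) //= -coE expr2 lerDl.
  by apply: sumr_ge0 => j _; rewrite -expr2 sqr_ge0.
rewrite ler_norml; apply/andP; split; nra.
Qed.

Lemma inv_le (x y : R) : 0 < x -> x <= y -> y^-1 <= x^-1.
Proof. by move=> hx hxy; rewrite lef_pV2 ?posrE // (lt_le_trans hx hxy). Qed.

Definition PP (E0 : R) := (1 + E0)^-1.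
Definition LL (E0 : R) := ((1 - c 0%N ^+ 2) * PP E0)^-1.

Lemma pb0_lb (x : 'cV[R]_n) E0 : dotv x x = 1 -> 0 < pb 0 x -> Ex x <= E0 ->
  PP E0 <= pb 0 x.
Proof.
move=> hx hp hE; rewrite -[pb 0 x]invrK inv_pb0 // /PP.
apply: inv_le; last by rewrite lerD2l.
by have := Ex_ge0 x; lra.
Qed.

Lemma PP_gt0 E0 : 0 <= E0 -> 0 < PP E0.
Proof. by move=> h; rewrite /PP invr_gt0; lra. Qed.

Lemma vn_inv_sq (y : 'cV[R]_n) E0 : 0 <= E0 ->
  (1 - c 0%N ^+ 2) * PP E0 <= pb 0 y ->
  0 <= (vnorm y)^-1 /\ ((vnorm y)^-1) ^+ 2 <= LL E0.
Proof.
move=> hE0 hy.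
have hs := sig_gt0.
have hP := PP_gt0 hE0.
have hpos : 0 < (1 - c 0%N ^+ 2) * PP E0 by rewrite mulr_gt0.
have hd : (1 - c 0%N ^+ 2) * PP E0 <= dotv y y by apply: le_trans hy (dotv_ge_pb0 _).
have hd0 : 0 < dotv y y by apply: lt_le_trans hpos hd.
split; first by rewrite invr_ge0 /vnorm sqrtr_ge0.
rewrite exprVn /vnorm sqr_sqrtr ?(ltW hd0) // /LL.
exact: inv_le.
Qed.

Definition K1 (E0 : R) := 2 * (1 + E0) + 4 * LL E0 ^+ 2 * E0 + 2 * LL E0.

Lemma step_incr01 (x : 'cV[R]_n) E0 i : dotv x x = 1 -> 0 < pb 0 x -> Ex x <= E0 ->
  (i <= 1)%N -> `|co (aci_step A x) i - co x i| <= K1 E0 * Ex x.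
Proof.
move=> hx hp hE hi.
have [hwt hw1 hw2 hw3] := stepw hx hp.
have [hvt hv1 hv2 hv3] := stepv hx hp.
set w := aci_w A x in hw1 hw2 hw3 hv3.
set x' := aci_step A x in hv1 hv2 hv3 *.
have hq0 := q_ge0; have hq1 := q_lt1.
have hEx := Ex_ge0 x; have hE0 : 0 <= E0 by apply: le_trans hE.
have hEw : Ex w <= Ex x by apply: le_trans hw3 _; apply: ler_piMl => //; exact: ltW.
have hEx' : Ex x' <= Ex x by apply: le_trans hv3 _; apply: le_trans hEw; apply: ler_piMl => //; [exact: Ex_ge0 | exact: ltW].
have [ha1 ha2] := andP (alpha_range s hx).
have [hb1 hb2] := andP (alpha_range s hw1).
have ha3 := le_trans (alpha_sub s hx) (Dx_le_Ex hx hp).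
have hb3 := le_trans (alpha_sub s hw1) (Dx_le_Ex hw1 hw2).
set al := dotv x (A *m x) in ha1 ha2 ha3 *.
set be := dotv w (A *m w) in hb1 hb2 hb3 *.
set mu := (vnorm (aci_wt A x))^-1.
set nu := (vnorm (aci_vt A x))^-1.
have [e0 e1] := @step_coords x al be mu nu erefl erefl erefl erefl.
have ha : 0 <= (c 0%N - al) * (c 0%N - be) + s 0%N ^+ 2.
  apply: addr_ge0; last exact: sqr_ge0.
  by rewrite -mulrNN mulr_ge0 // opprB subr_ge0.
set d := s 0%N * (al - be).
have hs1 : `|s 0%N| <= 1.
  have := Hcs Hm; have := sqr_ge0 (c 0%N) => h1 h2.
  rewrite ler_norml; apply/andP; split; nra.
have hd : `|d| <= 2 * Ex x.
  rewrite /d normrM -[X in _ <= X]mul1r; apply: ler_pM => //.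
  by rewrite ler_norml; apply/andP; split; lra.
have hPx := pb0_lb hx hp hE.
have hPw := pb0_lb hw1 hw2 (le_trans hEw hE).
have hP := PP_gt0 hE0.
have hsig := sig_gt0.
have hwtp : (1 - c 0%N ^+ 2) * PP E0 <= pb 0 (aci_wt A x).
  rewrite /aci_wt pb_shift_A -/al; apply: ler_pM => //; [exact: ltW | exact: ltW | exact: ff0_lb].
have hvtp : (1 - c 0%N ^+ 2) * PP E0 <= pb 0 (aci_vt A x).
  have -> : aci_vt A x = (AT - be%:M) *m w by rewrite /aci_vt blkA_tr.
  rewrite pb_shift_AT; apply: ler_pM => //; [exact: ltW | exact: ltW | exact: ff0_lb].
have [hmu0 hmu] := vn_inv_sq hE0 hwtp.
have [hnu0 hnu] := vn_inv_sq hE0 hvtp.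
rewrite -/mu in hmu0 hmu; rewrite -/nu in hnu0 hnu.
have hL0 : 0 <= LL E0 by rewrite /LL invr_ge0 mulr_ge0 // ?ltW.
have hlam0 : 0 <= nu * mu by rewrite mulr_ge0.
have hlam2 : (nu * mu) ^+ 2 <= LL E0 ^+ 2.
  by rewrite exprMn expr2 [X in _ <= X]expr2 ler_pM // sqr_ge0.
have hlam : nu * mu <= LL E0.
  by rewrite -(ler_sqr) ?nnegrE.
have hdx := dot_split x; have hdx' := dot_split x'.
have hPP : `|pb 0 x' - pb 0 x| <= 2 * Ex x.
  have -> : pb 0 x' - pb 0 x = Dx x - Dx x' by move: hdx hdx'; rewrite hx hv1; lra.
  have := Dx_le_Ex hx hp; have := Dx_le_Ex hv1 hv2; have := Dx_ge0 x; have := Dx_ge0 x'.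
  move=> g1 g2 g3 g4; rewrite ler_norml; apply/andP; split; lra.
have hinv := inv_pb0 hx hp.
have T1 : `|pb 0 x' - pb 0 x| / pb 0 x <= 2 * Ex x * (1 + E0).
  rewrite hinv; apply: ler_pM => //; first by rewrite addr_ge0.
  by rewrite lerD2l.
have hd2 : d ^+ 2 <= (2 * Ex x) ^+ 2.
  by move: hd; rewrite ler_norml => /andP[h1 h2]; nra.
have T2 : (nu * mu) ^+ 2 * d ^+ 2 <= 4 * LL E0 ^+ 2 * E0 * Ex x.
  apply: le_trans (ler_pM _ _ hlam2 hd2) _; rewrite ?sqr_ge0 //.
  have : Ex x * Ex x <= E0 * Ex x by apply: ler_wpM2r.
  have := sqr_ge0 (LL E0) => hL2 h.
  nra.
have T3 : nu * mu * `|d| <= LL E0 * (2 * Ex x) by apply: ler_pM.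
have key := @incr_scalar (co x 0) (co x 1) (nu * mu)
  ((c 0%N - al) * (c 0%N - be) + s 0%N ^+ 2) d (pb 0 x) (pb 0 x')
  (co_small01 _ hx) (co_small01 _ hx) hlam0 ha hp erefl.
have [k0 k1] : `|co x' 0 - co x 0| <= `|pb 0 x' - pb 0 x| / pb 0 x + (nu * mu) ^+ 2 * d ^+ 2 + nu * mu * `|d| /\
  `|co x' 1 - co x 1| <= `|pb 0 x' - pb 0 x| / pb 0 x + (nu * mu) ^+ 2 * d ^+ 2 + nu * mu * `|d|.
  rewrite e0 e1 -/d; apply: key.
  by rewrite /pb /= e0 e1 -/d.
rewrite /K1.
have fin : `|pb 0 x' - pb 0 x| / pb 0 x + (nu * mu) ^+ 2 * d ^+ 2 + nu * mu * `|d|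
   <= (2 * (1 + E0) + 4 * LL E0 ^+ 2 * E0 + 2 * LL E0) * Ex x.
  apply: le_trans (lerD (lerD T1 T2) T3) _.
  by rewrite le_eqVlt; apply/orP; left; apply/eqP; ring.
case: i hi => [|[|//]] _; [exact: le_trans k0 fin | exact: le_trans k1 fin].
Qed.

Lemma co_le_Dx (x : 'cV[R]_n) i : (2 <= i)%N -> co x i ^+ 2 <= Dx x.
Proof.
move=> hi; set j := i./2.
have h1 : co x i ^+ 2 <= pb j x.
  have := odd_double_half i; rewrite /pb -/j.
  case: (odd i) => /= <-; rewrite ?add0n.
  - by rewrite lerDr sqr_ge0.
  - by rewrite lerDl sqr_ge0.
apply: le_trans h1 _.
case: (leqP j m) => hjm.
- have hj' : (j.-1 < m)%N by lia.
  rewrite /Dx (bigD1 (Ordinal hj')) //=.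
  have -> : j.-1.+1 = j by lia.
  by rewrite lerDl sumr_ge0 // => l _; apply: pb_ge0.
- rewrite /pb !co_out; first by rewrite expr0n addr0 Dx_ge0.
  + by case: b; lia.
  + by case: b; lia.
Qed.

Lemma abs_le_of_sq (u r : R) : 0 <= r -> u ^+ 2 <= r ^+ 2 -> `|u| <= r.
Proof. by move=> h1 h2; rewrite ler_norml; apply/andP; split; nra. Qed.

Definition KK (E0 : R) := K1 E0 * E0 + 2 * Num.sqrt E0.

Lemma K1_ge0 E0 : 0 <= E0 -> 0 <= K1 E0.
Proof.
move=> h; have hL : 0 <= LL E0.
  by rewrite /LL invr_ge0 mulr_ge0 ?(ltW sig_gt0) ?(ltW (PP_gt0 h)).
rewrite /K1; have := sqr_ge0 (LL E0); move=> h2.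
have : 0 <= LL E0 ^+ 2 * E0 by rewrite mulr_ge0.
lra.
Qed.

Lemma coord_bound (v0 : 'cV[R]_n) : dotv v0 v0 = 1 -> 0 < pb 0 v0 -> forall k i,
  `|co (vv v0 k.+1) i - co (vv v0 k) i| <= KK (Ex v0) * q ^+ k.
Proof.
move=> h1 h2 k i.
have [a1 a2 a3] := iter_props h1 h2 k.
have [b1 b2 b3] := iter_props h1 h2 k.+1.
set E0 := Ex v0 in a3 b3 *.
have hE0 : 0 <= E0 := Ex_ge0 v0.
have hq0 := q_ge0; have hq1 := ltW q_lt1.
set r := q ^+ k.
have hr0 : 0 <= r by rewrite exprn_ge0.
have hr1 : r <= 1 by rewrite exprn_ile1.
have er : (q ^+ 2) ^+ k = r ^+ 2 by rewrite exprAC.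
rewrite er in a3.
have b3' : Ex (vv v0 k.+1) <= r ^+ 2 * E0.
  apply: le_trans b3 _; rewrite exprS er -mulrA; apply: ler_piMl.
    by rewrite mulr_ge0 ?sqr_ge0.
  by rewrite expr2; apply: mulr_ile1.
have hK1 := K1_ge0 hE0.
have hM : 0 <= Num.sqrt E0 by rewrite sqrtr_ge0.
have hM2 : Num.sqrt E0 ^+ 2 = E0 by rewrite sqr_sqrtr.
case: (leqP i 1) => hi.
- have hEk : Ex (vv v0 k) <= E0.
    apply: le_trans a3 _; apply: ler_piMl => //; rewrite expr2; exact: mulr_ile1.
  apply: le_trans (step_incr01 a1 a2 hEk hi) _.
  rewrite /KK.
  have : K1 E0 * Ex (vv v0 k) <= K1 E0 * (r ^+ 2 * E0) by apply: ler_wpM2l.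
  have : r ^+ 2 <= r by rewrite expr2; apply: ler_piMl.
  have := sqrtr_ge0 E0.
  move=> g1 g2 g3.
  have g4 : K1 E0 * (r ^+ 2 * E0) <= K1 E0 * E0 * r.
    have g2' : 0 <= r - r ^+ 2 by rewrite subr_ge0.
    have := mulr_ge0 (mulr_ge0 hK1 hE0) g2'.
    move=> hh; move: hh; rewrite mulrBr; lra.
  have g5 : 0 <= 2 * Num.sqrt E0 * r by rewrite !mulr_ge0.
  apply: le_trans g3 _; apply: le_trans g4 _.
  rewrite mulrDl; lra.
- have c1 : `|co (vv v0 k) i| <= Num.sqrt E0 * r.
    apply: abs_le_of_sq; first by rewrite mulr_ge0.
    apply: le_trans (co_le_Dx _ hi) _; apply: le_trans (Dx_le_Ex a1 a2) _.
    by rewrite exprMn hM2 mulrC.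
  have c2 : `|co (vv v0 k.+1) i| <= Num.sqrt E0 * r.
    apply: abs_le_of_sq; first by rewrite mulr_ge0.
    apply: le_trans (co_le_Dx _ hi) _; apply: le_trans (Dx_le_Ex b1 b2) _.
    by rewrite exprMn hM2 mulrC.
  apply: le_trans (ler_normB _ _) _.
  have g : 0 <= K1 E0 * E0 * r by apply: mulr_ge0 => //; apply: mulr_ge0.
  rewrite /KK mulrDl; lra.
Qed.

End Main.
Section Anal.
Variable R : realType.

Lemma geo_cvg (u : nat -> R) (K r : R) : 0 <= r -> r < 1 ->
  (forall k, `|u k.+1 - u k| <= K * r ^+ k) -> cvgn u.
Proof.
move=> r0 r1 hu.
have hK : 0 <= K by have := hu 0%N; rewrite expr0 mulr1; apply: le_trans.
have h1r : 0 < 1 - r by rewrite subr_gt0.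
set C := K / (1 - r).
have hC : 0 <= C by rewrite /C divr_ge0 // ltW.
have eC : C * r = C - K by rewrite /C; field; rewrite gt_eqF.
have hrk : forall k, 0 <= r ^+ k by move=> k; rewrite exprn_ge0.
pose a k := u k - C * r ^+ k.
have ha : nondecreasing_seq a.
  apply/nondecreasing_seqP => k; rewrite /a exprS mulrA eC.
  have := hu k; rewrite ler_norml => /andP[h _].
  have := hrk k; move=> hh; nra.
have ub : forall k, u k <= u 0%N + C - C * r ^+ k.
  elim=> [|k IH]; first by rewrite expr0 mulr1 addrK.
  have := hu k; rewrite ler_norml => /andP[_ h].
  rewrite exprS mulrA eC; have := hrk k; move=> hh; nra.
have hb : has_ubound (range a).
  exists (u 0%N + C) => _ [k _ <-]; rewrite /a.
  have := ub k; have := mulr_ge0 hC (hrk k); lra.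
have ca := nondecreasing_is_cvgn ha hb.
have -> : u = (fun k => a k + C * r ^+ k) by apply: funext => k; rewrite /a subrK.
apply: is_cvgD => //.
apply: cvgP; apply: cvg_geometric.
by rewrite ger0_norm.
Qed.

End Anal.
Section Anal2.
Variable R : realType.

Lemma mx_cvg (N : nat) (V : nat -> 'cV[R]_N) : (forall i, cvgn (fun k => V k i 0)) ->
  exists l : 'cV[R]_N, V k @[k --> \oo] --> l.
Proof.
move=> hV.
exists (\matrix_(i < N, j < 1) limn (fun k => V k i 0)).
apply/cvgrPdist_le => /= e e0.
near=> k.
rewrite [leLHS]/Num.Def.normr/= mx_normrE (bigmax_le _ (ltW e0))//= => -[i j] _.
rewrite !mxE/= (ord1 j).
move: i; near: k; apply: filter_forall => /= i.
exact: ((cvgrPdist_le _ _).1 (hV i)).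
Unshelve. all: by end_near. Qed.

End Anal2.

Theorem theorem4p8 (R : realType) (m : nat) (b : bool) (c s : nat -> R)
  (v0 : 'cV[R]_(m.*2 + b)) :
  (1 <= m)%N ->
  (forall j, (j < m)%N -> c j ^+ 2 + s j ^+ 2 = 1) ->
  (forall j, (j < m)%N -> s j != 0) ->
  0 < c 0%N ->
  (forall j, (j.+1 < m)%N -> c j < c j.+1) ->
  c m.-1 < 1 ->
  vnorm v0 = 1 ->
  (2 <= grade (blkA m b c s) v0)%N ->
  (exists i : 'I_(m.*2 + b), (i < 2)%N && (v0 i 0 != 0)) ->
  (forall k, aci_wt (blkA m b c s) (aci_v (blkA m b c s) v0 k) != 0
          /\ aci_vt (blkA m b c s) (aci_v (blkA m b c s) v0 k) != 0) /\
  exists l : 'cV[R]_(m.*2 + b), aci_v (blkA m b c s) v0 k @[k --> \oo] --> l.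
Proof.
move=> Hm Hcs _ Hc0 Hinc Hlast hv0 _ [i /andP[hi hvi]].
have hd0 : 0 <= dotv v0 v0 by rewrite dotv_pb sumr_ge0 // => j _; apply: pb_ge0.
have h1 : dotv v0 v0 = 1.
  by rewrite -(sqr_sqrtr hd0); move: hv0; rewrite /vnorm => ->; rewrite expr1n.
have h2 : 0 < pb 0 v0.
  have hsq : 0 < co v0 i ^+ 2 by rewrite coE exprn_even_gt0.
  rewrite /pb /=.
  have := sqr_ge0 (co v0 0); have := sqr_ge0 (co v0 1).
  move: hsq; case: i hi hvi => [[|[|//]]] /= hi0 _ _ hsq; lra.
split.
- move=> k.
  have [a1 a2 _] := iter_props (s:=s) Hm Hcs Hc0 Hinc Hlast h1 h2 k.
  have [w1 _ _ _] := stepw Hm Hcs Hc0 Hinc Hlast a1 a2.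
  have [v1 _ _ _] := stepv Hm Hcs Hc0 Hinc Hlast a1 a2.
  by split.
- apply: mx_cvg => i'.
  apply: (@geo_cvg _ _ (KK c (Ex v0)) (q m c)).
  + exact: q_ge0.
  + exact: q_lt1.
  + move=> k; rewrite -!coE.
    exact: (coord_bound (s:=s) Hm Hcs Hc0 Hinc Hlast h1 h2 k i').
Qed.
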